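(* Let $H$ be a Hilbert space and $U_{ik}\in B(H)$, $i,k=1,\dots,n$, operators satisfying relations (R1)–(R5). Then $U_{ik}U_{il}=0$ for all $i,k,l$ with $k\neq l$.
   Context: $n\ge2$, $\theta\in M_n(\mathbb R)$ skew-symmetric, $\omega_{ij}=e^{2\pi i\theta_{ij}}$. Relations, for all $i,j,k,l\in\{1,\dots,n\}$: (R1) $U_{ik}U_{jl}+\omega_{ji}U_{jk}U_{il}=\omega_{kl}U_{il}U_{jk}+\omega_{ji}\omega_{kl}U_{jl}U_{ik}$; (R2) $\sum_iU_{ik}U_{il}^*=\delta_{kl}1$; (R3) $\sum_iU_{il}^*U_{ik}=\delta_{kl}1$; (R4) $U_{jk}U_{ik}^*=0$ for $i\neq j$; (R5) $U_{ik}^*U_{jk}=0$ for $i\neq j$. *)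

(* Defs.v *)
From HB Require Import structures.
From mathcomp Require Import all_boot all_order all_algebra.
From mathcomp Require Import all_classical all_reals all_analysis.
From mathcomp Require Import complex.
Set Implicit Arguments. Unset Strict Implicit. Unset Printing Implicit Defensive.
Import Order.TTheory GRing.Theory Num.Theory.
Local Open Scope ring_scope.

Definition ipnorm (R : realType) (V : lmodType R[i]) (ip : V -> V -> R[i])
  (x : V) : R := Num.sqrt (complex.Re (ip x x)).

Definition is_inner_product (R : realType) (V : lmodType R[i])
  (ip : V -> V -> R[i]) : Prop :=
  [/\ (forall (a : R[i]) (x y z : V), ip (a *: x + y) z = a * ip x z + ip y z),
      (forall x y : V, ip y x = conjc (ip x y)),
      (forall x : V, 0 <= ip x x) &
      (forall x : V, ip x x = 0 -> x = 0)].

Definition ip_complete (R : realType) (V : lmodType R[i])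
  (ip : V -> V -> R[i]) : Prop :=
  forall u : nat -> V,
    (forall e : R, 0 < e -> exists N : nat, forall m p : nat,
        (N <= m)%N -> (N <= p)%N -> ipnorm ip (u m - u p) < e) ->
    exists l : V, forall e : R, 0 < e -> exists N : nat, forall m : nat,
        (N <= m)%N -> ipnorm ip (u m - l) < e.

Definition is_hilbert (R : realType) (V : lmodType R[i])
  (ip : V -> V -> R[i]) : Prop :=
  is_inner_product ip /\ ip_complete ip.

Definition bounded_op (R : realType) (V : lmodType R[i])
  (ip : V -> V -> R[i]) (T : V -> V) : Prop :=
  (forall (a : R[i]) (x y : V), T (a *: x + y) = a *: T x + T y) /\
  exists M : R, forall x : V, ipnorm ip (T x) <= M * ipnorm ip x.

Definition is_adjoint (R : realType) (V : lmodType R[i])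
  (ip : V -> V -> R[i]) (T Ts : V -> V) : Prop :=
  forall x y : V, ip (T x) y = ip x (Ts y).

(* omega_ij = e^{2 pi i theta_ij} = cos(2 pi theta_ij) + i sin(2 pi theta_ij). *)
Definition omega (R : realType) (n : nat) (theta : 'M[R]_n) (i j : 'I_n) : R[i] :=
  Complex (cos (2 * pi * theta i j)) (sin (2 * pi * theta i j)).

(* Main.v *)
Require Import Defs.
From HB Require Import structures.
From mathcomp Require Import all_boot all_order all_algebra.
From mathcomp Require Import all_classical all_reals all_analysis.
From mathcomp Require Import complex.
From mathcomp Require Import lra.
Import Order.TTheory GRing.Theory Num.Theory.
Local Open Scope ring_scope.
Lemma om1 (R : realType) n (theta : 'M[R]_n) (Ht : theta^T = - theta) i : omega theta i i = 1.
Proof.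
have : theta i i = 0.
  have := congr1 (fun M : 'M[R]_n => M i i) Ht; rewrite !mxE => h.
  lra.
by rewrite /omega => ->; rewrite mulr0 cos0 sin0.
Qed.
Theorem proposition3p13
  (R : realType) (V : lmodType R[i]) (ip : V -> V -> R[i])
  (HV : is_hilbert ip)
  (n : nat) (Hn : (2 <= n)%N)
  (theta : 'M[R]_n) (Htheta : theta^T = - theta)
  (U Us : 'I_n -> 'I_n -> V -> V)
  (HU : forall i k : 'I_n, bounded_op ip (U i k))
  (HUs : forall i k : 'I_n, is_adjoint ip (U i k) (Us i k))
  (R1 : forall (i j k l : 'I_n) (x : V),
      U i k (U j l x) + omega theta j i *: U j k (U i l x)
      = omega theta k l *: U i l (U j k x)
        + (omega theta j i * omega theta k l) *: U j l (U i k x))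
  (R2 : forall (k l : 'I_n) (x : V),
      \sum_(i < n) U i k (Us i l x) = if k == l then x else 0)
  (R3 : forall (k l : 'I_n) (x : V),
      \sum_(i < n) Us i l (U i k x) = if k == l then x else 0)
  (R4 : forall (i j k : 'I_n) (x : V), i != j -> U j k (Us i k x) = 0)
  (R5 : forall (i j k : 'I_n) (x : V), i != j -> Us i k (U j k x) = 0) :
  forall (i k l : 'I_n) (x : V), k != l -> U i k (U i l x) = 0.
Proof.
case: HV => [[ipl ipc _ ipd] _].
have Ulin a i k x y : U i k (a *: x + y) = a *: U i k x + U i k y by case: (HU i k).
have Uadd i k x y : U i k (x + y) = U i k x + U i k y.
  by rewrite -[x in LHS]scale1r Ulin scale1r.
have U0 i k : U i k 0 = 0.
  have h := Uadd i k 0 0; rewrite addr0 in h.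
  by apply: (addrI (U i k 0)); rewrite addr0 -h.
have ip0 w : ip 0 w = 0.
  have := ipl 1 0 0 w; rewrite scaler0 addr0 mul1r => h.
  by apply: (addrI (ip 0 w)); rewrite addr0 -h.
have ipr0 a y w : ip y w = 0 -> ip y (a *: w) = 0.
  move=> h; rewrite ipc -[a *: w]addr0 ipl ipc h.
  by rewrite conjc0 mulr0 add0r ip0 conjc0.
have UsU i k l x : k != l -> Us i l (U i k x) = 0.
  move=> kl.
  have a : U i l (Us i l (U i k x)) = 0.
    have := congr1 (U i l) (R3 k l x).
    rewrite (negbTE kl). rewrite U0.
    rewrite (big_morph (U i l) (Uadd i l) (U0 i l)).
    rewrite (bigD1 i) //= big1 ?addr0 //.
    by move=> j ji; apply: R4.
  apply: ipd; rewrite {2}[Us i l _]/= -(HUs i l) a ip0 //.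
have PI i k y : U i k y = U i k (Us i k (U i k y)).
  have := R2 k k (U i k y); rewrite eqxx => h.
  rewrite -[LHS]h.
  rewrite (bigD1 i) //= big1 ?addr0 //.
  by move=> j ji; rewrite R5 ?U0 // eq_sym.
have comm i k l x : U i k (U i l x) = omega theta k l *: U i l (U i k x).
  have := R1 i i k l x; rewrite om1 // mul1r scale1r.
  move=> h.
  have /(congr1 (fun v => (2%:R : R[i])^-1 *: v)) : (2%:R : R[i]) *: U i k (U i l x) = 2%:R *: (omega theta k l *: U i l (U i k x)).
    by rewrite !scaler_nat !mulr2n; exact: h.
  rewrite !scalerA mulrA mulVf ?mul1r ?scale1r //.
move=> i k l x kl.
rewrite PI comm.
set z := Us i k _.
have -> : z = 0; last by rewrite U0.
apply: ipd; rewrite {2}/z -(HUs i k) ipr0 //.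
rewrite (HUs i k) UsU; last by rewrite eq_sym.
by rewrite ipc ip0 conjc0.

Qed.
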